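(* Let $k \ge 2$ be an integer, $h_k(x) = x + \left\lfloor \frac{x}{k-1} \right\rfloor + 1$ for non-negative integers $x$, and let $\mathcal{G}$ be the Grundy function of Maximum Nim with rule function $f(x)=\lfloor x/k \rfloor$. Then: (i) $h_k(x) = \left\lfloor \frac{h_k(x)}{k} \right\rfloor + x + 1$ for every non-negative integer $x$; (ii) $\mathcal{G}(h_k(x)) = \mathcal{G}(x)$ for every non-negative integer $x$; (iii) for every non-negative integer $m$ there exists a non-negative integer $x_0$ such that $\{x \in \mathbb{Z}_{\ge 0} : \mathcal{G}(x) = m\} = \{h_k^p(x_0) : p \in \mathbb{Z}_{\ge 0}\}$, where $h_k^p$ is the $p$-th functional iterate of $h_k$.
   Context: Maximum Nim with rule function $f(x)=\lfloor x/k\rfloor$: a position is a pile of $x \ge 0$ stones, and from $x$ one may move to $x-u$ for any integer $u$ with $1 \le u \le \lfloor x/k \rfloor$. The Grundy number is defined recursively by $\mathcal{G}(x) = \mathrm{mex}\{\mathcal{G}(x-u) : 1 \le u \le \lfloor x/k\rfloor\}$, where $\mathrm{mex}(S)$ is the least non-negative integer not in $S$. *)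

(* Defs.v *)
From mathcomp Require Import all_boot.
Set Implicit Arguments. Unset Strict Implicit. Unset Printing Implicit Defensive.

Definition mex (s : seq nat) : nat :=
  find (fun m => m \notin s) (iota 0 (size s).+1).

(* grundy_list k n = [:: G 0; G 1; ...; G (n-1)] for Maximum Nim with
   rule f(x) = floor(x/k): from x one may move to x-u, 1 <= u <= x %/ k. *)
Fixpoint grundy_list (k n : nat) : seq nat :=
  match n with
  | 0 => [::]
  | n'.+1 =>
      let l := grundy_list k n' in
      rcons l (mex [seq nth 0 l (n' - u) | u <- iota 1 (n' %/ k)])
  end.

Definition grundy (k x : nat) : nat := nth 0 (grundy_list k x.+1) x.

Definition h (k x : nat) : nat := x + x %/ (k - 1) + 1.

(* Main.v *)
Require Import Defs.
From mathcomp Require Import all_boot zify.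

Lemma size_gl k n : size (grundy_list k n) = n.
Proof. by elim: n => //= n IH; rewrite size_rcons IH. Qed.

Lemma nth_gl k n x : x < n -> nth 0 (grundy_list k n) x = grundy k x.
Proof.
elim: n => // n IH lt; rewrite /= nth_rcons size_gl.
case: ltnP => [lt'|ge]; first by rewrite IH.
have -> : x = n by lia.
by rewrite eqxx /grundy /= nth_rcons size_gl ltnn eqxx.
Qed.

Lemma grundyE k y : grundy k y = mex [seq grundy k (y-u) | u <- iota 1 (y %/ k)].
Proof.
rewrite /grundy /= nth_rcons size_gl ltnn eqxx; congr mex.
apply/eq_in_map => u; rewrite mem_iota => /andP[u1 u2].
apply: nth_gl; have := leq_div y k; lia.
Qed.

Lemma win_in k y z : y - y %/ k <= z < y ->
  grundy k z \in [seq grundy k (y-u) | u <- iota 1 (y %/ k)].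
Proof.
move=> Hz; apply/mapP; exists (y - z); first by rewrite mem_iota; lia.
congr grundy; lia.
Qed.

Lemma win_out k y v : v \in [seq grundy k (y-u) | u <- iota 1 (y %/ k)] ->
  exists z, y - y %/ k <= z < y /\ grundy k z = v.
Proof.
move/mapP=> [u]; rewrite mem_iota => Hu ->; exists (y - u); split => //.
have := leq_div y k; lia.
Qed.

Lemma find_iota_eq (p : pred nat) a n m : a <= m < a + n ->
  (forall v, a <= v < m -> ~~ p v) -> p m -> find p (iota a n) = m - a.
Proof.
elim: n a => [|n IH] a; first lia.
move=> Hm Hlt Hp /=.
case: (ltnP a m) => am.
  rewrite (negbTE (Hlt a _)); last lia.
  rewrite (IH a.+1) //; [lia|lia|move=> v Hv; apply: Hlt; lia].
have -> : a = m by lia.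
by rewrite Hp subnn.
Qed.

Lemma mexP s m : (forall v, v < m -> v \in s) -> m \notin s -> mex s = m.
Proof.
move=> Hlt Hm.
have Hs : m <= size s.
  have := uniq_leq_size (iota_uniq 0 m) (s2 := s).
  rewrite size_iota; apply => v; rewrite mem_iota => /andP[_ ?]; apply: Hlt; lia.
rewrite /mex (@find_iota_eq _ _ _ m) ?subn0 //.
by move=> v /andP[_ ?]; rewrite negbK; apply: Hlt.
Qed.

Lemma hqr k q r : 2 <= k -> r < k - 1 -> h k (q * (k-1) + r) = q * k + r + 1.
Proof.
move=> hk hr; rewrite /h divnMDl; last lia.
rewrite (divn_small hr); nia.
Qed.

Lemma hA k x : 2 <= k -> h k x = h k x %/ k + x + 1.
Proof.
move=> hk.
have [q [r [-> hr]]] : exists q r, x = q*(k-1)+r /\ r < k-1.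
  exists (x %/ (k-1)), (x %% (k-1)); split; [apply: divn_eq | apply: ltn_pmod; lia].
rewrite hqr // -addnA divnMDl; last lia.
rewrite divn_small; [nia|lia].
Qed.

Lemma hstep k x : 2 <= k -> h k x.+1 = (h k x).+1 \/
  (h k x.+1 = (h k x).+2 /\ (h k x).+1 %/ k = h k x - x).
Proof.
move=> hk.
have [q [r [-> hr]]] : exists q r, x = q*(k-1)+r /\ r < k-1.
  exists (x %/ (k-1)), (x %% (k-1)); split; [apply: divn_eq | apply: ltn_pmod; lia].
rewrite hqr //.
case: (ltnP r.+1 (k-1)) => hr'.
  left; rewrite -addnS hqr //; lia.
right.
have -> : (q * (k - 1) + r).+1 = q.+1 * (k-1) + 0 by nia.
rewrite hqr //; last lia.
split; first nia.
have -> : (q * k + r + 1).+1 = q.+1 * k + 0 by nia.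
rewrite divnMDl; last lia.
rewrite div0n; nia.
Qed.

Lemma hL k x : h k x - x = x %/ (k-1) + 1.
Proof. by rewrite /h -addnA addKn. Qed.

Lemma hmono k x y : x <= y -> h k x - x <= h k y - y.
Proof. move=> xy; rewrite !hL leq_add2r; exact: leq_div2r. Qed.

Definition Inv' k a b L :=
  [/\ (forall z, a <= z < b -> grundy k z < L),
      (forall z1 z2, a <= z1 < b -> a <= z2 < b -> grundy k z1 = grundy k z2 -> z1 = z2)
    & (forall v, v < L -> exists2 z, a <= z < b & grundy k z = v)].

Lemma shift1 k x b L : x < b -> Inv' k x b L -> grundy k b = grundy k x -> Inv' k x.+1 b.+1 L.
Proof.
move=> xb [Hb Hi Hs] Hg; split.
- move=> z Hz; case: (ltnP z b) => zb; first by apply: Hb; lia.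
  have -> : z = b by lia. rewrite Hg; apply: Hb; lia.
- move=> z1 z2 H1 H2 E.
  case: (ltnP z1 b) => h1; case: (ltnP z2 b) => h2.
  + apply: Hi => //; lia.
  + have e2 : z2 = b by lia. subst z2. rewrite Hg in E.
    have := Hi z1 x ltac:(lia) ltac:(lia) E; lia.
  + have e1 : z1 = b by lia. subst z1. rewrite Hg in E.
    have := Hi x z2 ltac:(lia) ltac:(lia) E; lia.
  + lia.
- move=> v /Hs [z Hz Ez].
  case: (eqVneq z x) => [ezx|nzx].
    by exists b; [lia | rewrite Hg -ezx].
  by exists z; [lia|].
Qed.

Lemma extend k a b L : a <= b -> Inv' k a b L -> grundy k b = L -> Inv' k a b.+1 L.+1.
Proof.
move=> ab [Hb Hi Hs] Hg; split.
- move=> z Hz; case: (ltnP z b) => zb; first by have := Hb z ltac:(lia); lia.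
  have -> : z = b by lia. by rewrite Hg.
- move=> z1 z2 H1 H2 E.
  case: (ltnP z1 b) => h1; case: (ltnP z2 b) => h2.
  + apply: Hi => //; lia.
  + have e2 : z2 = b by lia. subst z2. rewrite Hg in E.
    have := Hb z1 ltac:(lia); lia.
  + have e1 : z1 = b by lia. subst z1. rewrite Hg in E.
    have := Hb z2 ltac:(lia); lia.
  + lia.
- move=> v Hv; case: (ltnP v L) => vL.
    by have [z Hz Ez] := Hs v vL; exists z; [lia|].
  by exists b; [lia | rewrite Hg; lia].
Qed.

Definition Inv k x := Inv' k x (h k x) (h k x - x).

Lemma hgt k x : x < h k x.
Proof. by rewrite /h addn1 ltnS leq_addr. Qed.

Lemma keystep k x : 2 <= k -> Inv k x -> grundy k (h k x) = grundy k x.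
Proof.
move=> hk [Hb Hi Hs].
have HA := @hA k x hk. have Hx := hgt k x.
have HA' : h k x %/ k = h k x - x.+1.
  by move: HA; set q := h k x %/ k; set y := h k x; clearbody q y; lia.
clear HA; rewrite grundyE; apply: mexP.
- move=> v Hv.
  have Hgx := Hb x ltac:(lia).
  have [z Hz Ez] := Hs v ltac:(lia).
  case: (eqVneq z x) => [ezx|nzx]; first by subst z; lia.
  rewrite -Ez; apply: win_in; rewrite HA'; lia.
- apply/negP => /win_out [z [Hz Ez]]; rewrite HA' in Hz.
  have := Hi z x ltac:(lia) ltac:(lia) Ez; lia.
Qed.

Lemma newval k x : 2 <= k -> Inv k x -> (h k x).+1 %/ k = h k x - x ->
  grundy k (h k x).+1 = h k x - x.
Proof.
move=> hk I; have := @keystep k x hk I; case: I => [Hb Hi Hs] Hk.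
have Hx := hgt k x.
move=> E; rewrite grundyE; apply: mexP.
- move=> v Hv.
  have [z Hz Ez] := Hs v Hv.
  case: (eqVneq z x) => [ezx|nzx].
    subst z; rewrite -Ez -Hk; apply: win_in; rewrite E; lia.
  rewrite -Ez; apply: win_in; rewrite E; lia.
- apply/negP => /win_out [z [Hz Ez]]; rewrite E in Hz.
  case: (ltnP z (h k x)) => zb.
    have := Hb z ltac:(lia); lia.
  have ez : z = h k x by lia.
  subst z; rewrite Hk in Ez; have := Hb x ltac:(lia); lia.
Qed.

Lemma Inv_all k x : 2 <= k -> Inv k x.
Proof.
move=> hk; elim: x => [|x IH].
  have G0 : grundy k 0 = 0 by rewrite grundyE div0n.
  rewrite /Inv /h div0n /=; split.
  - move=> z Hz; have -> : z = 0 by lia. by rewrite G0.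
  - move=> z1 z2 H1 H2 _; lia.
  - move=> v Hv; exists 0 => //; rewrite G0; lia.
have Hk := @keystep k x hk IH. have Hx := hgt k x.
have I1 := @shift1 k x (h k x) _ Hx IH Hk.
rewrite /Inv; case: (@hstep k x hk) => [E|[E E']].
  by rewrite E subSS.
have Hn := @newval k x hk IH E'.
have := @extend k x.+1 (h k x).+1 _ ltac:(lia) I1 Hn.
rewrite E; have -> : (h k x).+2 - x.+1 = (h k x - x).+1 by lia.
by [].
Qed.

Lemma structure k y : 2 <= k -> y = 0 \/ (exists x, y = h k x) \/
  (exists x, y = (h k x).+1 /\ (h k x).+1 %/ k = h k x - x).
Proof.
move=> hk; elim: y => [|y [E|[[x E]|[x [E E']]]]]; first by left.
- right; left; exists 0; rewrite E /h div0n.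
  by [].
- subst y; case: (@hstep k x hk) => [E|[E E']].
    by right; left; exists x.+1.
  by right; right; exists x.
- right; left; exists x.+1; subst y.
  case: (@hstep k x hk) => [E|[E _]]; last by rewrite E.
  have := @hA k x.+1 hk; rewrite E E'.
  have := hgt k x; move: (h k x) => H; lia.
Qed.

Lemma Gbound k z : 2 <= k -> grundy k z < h k z - z.
Proof. move=> hk; have [Hb _ _] := @Inv_all k z hk; apply: Hb; have := hgt k z; lia. Qed.

Theorem proposition1 (k : nat) (hk : 2 <= k) :
  (forall x : nat, h k x = h k x %/ k + x + 1) /\
  (forall x : nat, grundy k (h k x) = grundy k x) /\
  (forall m : nat, exists x0 : nat,
     forall x : nat, grundy k x = m <-> exists p : nat, x = iter p (h k) x0).
Proof.
split; first by move=> x; apply: hA.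
have KS : forall x, grundy k (h k x) = grundy k x.
  by move=> x; apply: keystep => //; apply: Inv_all.
split => // m.
have exP : exists z, (fun z => grundy k z == m) z.
  have [_ _ Hs] := @Inv_all k (m * (k-1)) hk.
  have [|z _ Ez] := Hs m; last by exists z; apply/eqP.
  rewrite hL mulnK; lia.
case: (ex_minnP exP) => x0 /eqP G0 Hmin.
exists x0 => x; split.
- elim/ltn_ind: x => x IH Gx.
  case: (@structure k x hk) => [E|[[x' E]|[x' [E E']]]].
  + have Hx0 := Hmin x ltac:(by apply/eqP).
    by exists 0; move: Hx0; rewrite E /=; lia.
  + have Gx' : grundy k x' = m by rewrite -KS -E.
    have [p Hp] := IH x' ltac:(rewrite E; apply: hgt) Gx'.
    by exists p.+1; rewrite E Hp iterS.
  + have := Hmin x ltac:(by apply/eqP) => Hx0.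
    case: (ltnP x0 x) => lt; last by exists 0 => /=; lia.
    exfalso.
    have Hn := @newval k x' hk (@Inv_all k x' hk) E'.
    have : grundy k x0 < grundy k x.
      rewrite E Hn.
      case: (ltnP x0 x') => l1.
        have := @Gbound k x0 hk; have := @hmono k x0 x' (ltnW l1); lia.
      case: (ltnP x0 (h k x')) => l2.
        have [Hb _ _] := @Inv_all k x' hk; apply: Hb; lia.
      have -> : x0 = h k x' by lia.
      rewrite KS; exact: (@Gbound k x' hk).
    lia.
- move=> [p ->]; elim: p => // p IH.
  by rewrite iterS KS.
Qed.
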